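(* Let $n\ge 2$, $p\ge 1$, $B\ge 1$ and $\theta\in[0,1]$, and consider the Complementary Pairs Stability Selection set $\hat S^{\mathrm{CPSS}}_{n,\tau}$, the sets $L_\theta$, $H_\theta$ and the procedures $\hat S_{\lfloor n/2\rfloor}$ described in the context. Then: (i) If $\tau\in(\tfrac12,1]$, then \[\mathbb{E}|\hat S^{\mathrm{CPSS}}_{n,\tau}\cap L_\theta|\le \frac{\theta}{2\tau-1}\,\mathbb{E}|\hat S_{\lfloor n/2\rfloor}\cap L_\theta|.\] (ii) Let $\hat N^{\mathrm{CPSS}}_{n,\tau}=\{1,\dots,p\}\setminus \hat S^{\mathrm{CPSS}}_{n,\tau}$ and $\hat N_{m}=\{1,\dots,p\}\setminus \hat S_{m}$. If $\tau\in[0,\tfrac12)$, then \[\mathbb{E}|\hat N^{\mathrm{CPSS}}_{n,\tau}\cap H_\theta|\le \frac{1-\theta}{1-2\tau}\,\mathbb{E}|\hat N_{\lfloor n/2\rfloor}\cap H_\theta|.\]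
   Context: Let $Z_1,\dots,Z_n$ be independent and identically distributed random elements. A variable selection procedure is a family of statistics $\hat S_m=\hat S_m(Z_1,\dots,Z_m)$, $m\ge1$, each taking values in the set of subsets of $\{1,\dots,p\}$. For $A=\{i_1<\dots<i_{|A|}\}\subseteq\{1,\dots,n\}$ write $\hat S(A):=\hat S_{|A|}(Z_{i_1},\dots,Z_{i_{|A|}})$. The selection probability of $k\in\{1,\dots,p\}$ is $p_{k,m}:=\mathbb{P}(k\in\hat S_m)$, where $\hat S_m=\hat S_m(Z_1,\dots,Z_m)$. Let $\{(A_{2j-1},A_{2j}):j=1,\dots,B\}$ be randomly chosen pairs of subsets of $\{1,\dots,n\}$, each subset of size $\lfloor n/2\rfloor$, with $A_{2j-1}\cap A_{2j}=\emptyset$, the pairs being independent of each other and of the data. Define $\hat\Pi_B(k):=\frac{1}{2B}\sum_{j=1}^{2B}\mathbb{1}_{\{k\in\hat S(A_j)\}}$ and, for $\tau\in[0,1]$, $\hat S^{\mathrm{CPSS}}_{n,\tau}:=\{k:\hat\Pi_B(k)\ge\tau\}$. For $\theta\in[0,1]$ let $L_\theta=\{k:p_{k,\lfloor n/2\rfloor}\le\theta\}$ and $H_\theta=\{k:p_{k,\lfloor n/2\rfloor}>\theta\}$. *)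

(* Defs.v *)
From HB Require Import structures.
From mathcomp Require Import all_boot all_order all_algebra.
From mathcomp Require Import all_classical all_reals all_analysis.
Set Implicit Arguments. Unset Strict Implicit. Unset Printing Implicit Defensive.
Import Order.TTheory GRing.Theory Num.Theory.
Local Open Scope classical_set_scope.
Local Open Scope ring_scope.

Lemma half_leq_self (n : nat) : (n./2 <= n)%N.
Proof. by rewrite -{2}(odd_double_half n) -addnn addnA leq_addl. Qed.

Definition cylinders {d} (X : measurableType d) (m : nat) : set (set ('I_m -> X)) :=
  [set C | exists (i : 'I_m) (E : set X), measurable E /\ C = (fun x => x i) @^-1` E].

Definition measurable_selection {d} (X : measurableType d) (p : nat)
    (S : forall m : nat, ('I_m -> X) -> {set 'I_p}) : Prop :=
  forall (m : nat) (k : 'I_p), <<s @cylinders _ X m >> [set x | k \in S m x].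

(* \hat S(A) for A = {i_1 < ... < i_|A|} : enum_val enumerates A increasingly. *)
Definition sel_sub {d} {T : Type} (X : measurableType d) (p n : nat)
    (S : forall m : nat, ('I_m -> X) -> {set 'I_p}) (Z : 'I_n -> T -> X)
    (A : {set 'I_n}) (w : T) : {set 'I_p} :=
  S #|A| (fun i => Z (@enum_val _ (mem A) i) w).

Definition sel_half {d} {T : Type} (X : measurableType d) (p n : nat)
    (S : forall m : nat, ('I_m -> X) -> {set 'I_p}) (Z : 'I_n -> T -> X)
    (w : T) : {set 'I_p} :=
  S n./2 (fun i => Z (widen_ord (half_leq_self n) i) w).

Definition Pi_hat {d} {T : Type} (R : realType) (X : measurableType d) (p n B : nat)
    (S : forall m : nat, ('I_m -> X) -> {set 'I_p}) (Z : 'I_n -> T -> X)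
    (A : 'I_B -> T -> {set 'I_n} * {set 'I_n}) (k : 'I_p) (w : T) : R :=
  (2 * B)%:R^-1 * \sum_(j < B)
     (((k \in sel_sub S Z (A j w).1 w) : nat)%:R
      + ((k \in sel_sub S Z (A j w).2 w) : nat)%:R).

Definition S_CPSS {d} {T : Type} (R : realType) (X : measurableType d) (p n B : nat)
    (S : forall m : nat, ('I_m -> X) -> {set 'I_p}) (Z : 'I_n -> T -> X)
    (A : 'I_B -> T -> {set 'I_n} * {set 'I_n}) (tau : R) (w : T) : {set 'I_p} :=
  [set k | tau <= Pi_hat R S Z A k w].

Definition sel_prob {d d'} {T : measurableType d'} (R : realType)
    (X : measurableType d) (p n : nat) (P : probability T R)
    (S : forall m : nat, ('I_m -> X) -> {set 'I_p}) (Z : 'I_n -> T -> X)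
    (k : 'I_p) : \bar R :=
  P [set w | k \in sel_half S Z w].

Definition L_set {d d'} {T : measurableType d'} (R : realType)
    (X : measurableType d) (p n : nat) (P : probability T R)
    (S : forall m : nat, ('I_m -> X) -> {set 'I_p}) (Z : 'I_n -> T -> X)
    (theta : R) : {set 'I_p} :=
  [set k | (sel_prob P S Z k <= theta%:E)%E].

Definition H_set {d d'} {T : measurableType d'} (R : realType)
    (X : measurableType d) (p n : nat) (P : probability T R)
    (S : forall m : nat, ('I_m -> X) -> {set 'I_p}) (Z : 'I_n -> T -> X)
    (theta : R) : {set 'I_p} :=
  [set k | (theta%:E < sel_prob P S Z k)%E].

(* Z_1..Z_n i.i.d., the B random pairs independent of each other and of the
   data: the family (Z_1,...,Z_n, pair_1, ..., pair_B) is mutually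
   independent and the Z_i are identically distributed. *)
Definition iid_and_indep {d d'} {T : measurableType d'} (R : realType)
    (X : measurableType d) (n B : nat) (P : probability T R)
    (Z : 'I_n -> T -> X) (A : 'I_B -> T -> {set 'I_n} * {set 'I_n}) : Prop :=
  (forall i, measurable_fun setT (Z i)) /\
  (forall j a, measurable (A j @^-1` [set a])) /\
  (forall i i' (E : set X), measurable E ->
      P (Z i @^-1` E) = P (Z i' @^-1` E)) /\
  (forall (E : 'I_n -> set X) (F : 'I_B -> set ({set 'I_n} * {set 'I_n})),
      (forall i, measurable (E i)) ->
      P ((\bigcap_i (Z i @^-1` E i)) `&` (\bigcap_j (A j @^-1` F j)))
      = ((\prod_(i < n) P (Z i @^-1` E i)) * (\prod_(j < B) P (A j @^-1` F j)))%E).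

Local Close Scope classical_set_scope.
Definition valid_pairs {T : Type} (n B : nat)
    (A : 'I_B -> T -> {set 'I_n} * {set 'I_n}) : Prop :=
  forall j w, #|(A j w).1| = n./2 /\ #|(A j w).2| = n./2 /\
              [disjoint (A j w).1 & (A j w).2].

(* Main.v *)
Require Import Defs.
From HB Require Import structures.
From mathcomp Require Import all_boot all_order all_algebra.
From mathcomp Require Import all_classical all_reals all_analysis.
From mathcomp Require Import ring lra.
Import Order.TTheory GRing.Theory Num.Theory.
Local Open Scope classical_set_scope.
Local Open Scope ring_scope.
Lemma le_int_nm d (T : measurableType d) (R : realType) (mu : {measure set T -> \bar R})
  (f g : T -> \bar R) : (forall x, (0 <= f x)%E) -> (forall x, (f x <= g x)%E) ->
  (\int[mu]_x f x <= \int[mu]_x g x)%E.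
Proof.
move=> f0 fg.
have g0 : forall x, (0 <= g x)%E by move=> x; exact: le_trans (f0 x) (fg x).
rewrite /integral !patch_setT.
have Ef : forall h : T -> \bar R, (forall x, (0 <= h x)%E) -> ((fun x => h x)^\- = cst 0)%E.
  move=> h h0; apply/funext => x /=; rewrite funenegE.
  by apply/max_idPr; rewrite leeNl oppe0 h0.
have Ep : forall h : T -> \bar R, (forall x, (0 <= h x)%E) -> ((fun x => h x)^\+ = h)%E.
  move=> h h0; apply/funext => x /=; rewrite funeposE.
  by apply/max_idPl; rewrite h0.
rewrite (Ef _ f0) (Ef _ g0) (Ep _ f0) (Ep _ g0).
apply: leeB => //.
apply: le_ereal_sup => _ [h hf <-]; exists h => //= x; exact: le_trans (hf x) (fg x).
Qed.

Lemma card_sum (R : realType) p (A L : {set 'I_p}) :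
  (#|A :&: L|%:R : R) = \sum_(k in L) ((k \in A) : nat)%:R.
Proof.
rewrite -sum1_card natr_sum [LHS]big_mkcond [RHS]big_mkcond /=.
by apply: eq_bigr => k _; rewrite inE; case: (k \in A); case: (k \in L).
Qed.

Lemma key_ineq (R : realType) (Bn : nat) (x y : 'I_Bn -> bool) (t : R) : (0 < Bn)%N -> 1/2 < t ->
  t <= (2 * Bn)%:R^-1 * \sum_(j < Bn) ((x j : nat)%:R + (y j : nat)%:R) ->
  1 <= ((2 * t - 1) * Bn%:R)^-1 * \sum_(j < Bn) ((x j && y j : bool) : nat)%:R.
Proof.
move=> B0 t2 h.
have Bp : 0 < (Bn%:R : R) by rewrite ltr0n.
have tp : 0 < 2 * t - 1 by lra.
set S := \sum_(j < Bn) _.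
have hs : \sum_(j < Bn) ((x j : nat)%:R + (y j : nat)%:R) <= Bn%:R + S :> R.
  have -> : (Bn%:R : R) = \sum_(j < Bn) 1 by rewrite sumr_const card_ord.
  rewrite /S -big_split /=.
  by apply: ler_sum => j _; case: (x j); case: (y j) => /=; lra.
have D0 : 0 < ((2 * Bn)%:R : R) by rewrite ltr0n muln_gt0.
have DD : ((2 * Bn)%:R : R) * ((2 * Bn)%:R)^-1 = 1 by rewrite mulfV // gt_eqF.
have h2 : t <= ((2 * Bn)%:R)^-1 * (Bn%:R + S).
  apply: (le_trans h); apply: ler_wpM2l => //; rewrite invr_ge0; exact: ltW.
have h3 : (2 * Bn)%:R * t <= Bn%:R + S :> R.
  by have := ler_wpM2l (ltW D0) h2; rewrite mulrA DD mul1r.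
have h4 : (2 * t - 1) * Bn%:R <= S.
  move: h3; rewrite natrM; lra.
rewrite mulrC ler_pdivlMr ?mul1r //; exact: mulr_gt0.
Qed.

Lemma int_sum (R : realType) d' (T : measurableType d') (P : probability T R)
  (I : finType) (Q : pred I) (c : I -> R) (D : I -> set T) :
  (forall i, 0 <= c i) -> (forall i, measurable (D i)) ->
  (\int[P]_w (\sum_(i | Q i) c i * \1_(D i) w)%:E = \sum_(i | Q i) (c i)%:E * P (D i))%E.
Proof.
move=> c0 mD.
under eq_integral => w _ do rewrite -sumEFin -big_filter.
rewrite ge0_integral_sum //.
- rewrite big_filter; apply: eq_bigr => i _.
  under eq_integral => w _ do rewrite EFinM.
  rewrite ge0_integralZl_EFin //; last first.
    by apply/measurable_realfun.measurable_EFinP; exact: measurable_realfun.measurable_indic.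
  by rewrite integral_indic // setIT.
- move=> i; apply/measurable_realfun.measurable_EFinP; apply: (@measurable_realfun.measurable_funM _ _ _ _ (cst (c i))) => //.
- by move=> i w _; rewrite lee_fin mulr_ge0 // indicE; case: (_ \in _).
Qed.

Lemma final (R : realType) d' (T : measurableType d') (P : probability T R) (p B : nat)
  (L : {set 'I_p}) (Sel Half : T -> {set 'I_p})
  (x y : 'I_B -> 'I_p -> T -> bool) (E : 'I_p -> set T) (r : 'I_p -> R) (t th : R) :
  (0 < B)%N -> 1/2 < t ->
  (forall k w, k \in Sel w ->
     t <= (2 * B)%:R^-1 * \sum_(j < B) ((x j k w : nat)%:R + (y j k w : nat)%:R)) ->
  (forall j k, measurable [set w | x j k w && y j k w]) ->
  (forall j k, P [set w | x j k w && y j k w] = (r k ^+ 2)%:E) ->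
  (forall k, measurable (E k)) -> (forall k, P (E k) = (r k)%:E) ->
  (forall k w, E k w <-> k \in Half w) ->
  (forall k, k \in L -> 0 <= r k <= th) ->
  (\int[P]_w (#|Sel w :&: L|%:R)%:E
    <= (th / (2 * t - 1))%:E * \int[P]_w (#|Half w :&: L|%:R)%:E)%E.
Proof.
move=> B0 t2 hsel mD PD mE PE EH hr.
have tp : 0 < 2 * t - 1 by lra.
have Bp : 0 < (B%:R : R) by rewrite ltr0n.
set c := ((2 * t - 1) * B%:R)^-1.
have cp : 0 < c by rewrite invr_gt0 mulr_gt0.
pose Dk (kj : 'I_p * 'I_B) := [set w | x kj.2 kj.1 w && y kj.2 kj.1 w].
have step1 : (\int[P]_w (#|Sel w :&: L|%:R)%:E <=
    \int[P]_w (\sum_(kj | (kj.1 \in L) && true) c * \1_(Dk kj) w)%:E)%E.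
  apply: le_int_nm => w; first by rewrite lee_fin ler0n.
  rewrite lee_fin card_sum.
  rewrite -(pair_big (fun k => k \in L) xpredT (fun k j => c * \1_(Dk (k, j)) w)) /=.
  apply: ler_sum => k kL.
  have -> : \sum_(j < B | true) c * \1_(Dk (k, j)) w =
      c * \sum_(j < B) ((x j k w && y j k w : bool) : nat)%:R.
    rewrite mulr_sumr; apply: eq_bigr => j _; rewrite indicE /Dk.
    suff -> : (w \in Dk (k, j)) = (x j k w && y j k w) by [].
    by apply/idP/idP => [/set_mem|h]; [|apply: mem_set].
  case: (boolP (k \in Sel w)) => hk /=.
    by rewrite /c; apply: key_ineq => //; exact: hsel.
  by apply: mulr_ge0; [exact: ltW | apply: sumr_ge0 => j _; exact: ler0n].
have step3 : (\int[P]_w (#|Half w :&: L|%:R)%:E = \sum_(k in L) 1%:E * (r k)%:E)%E.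
  under eq_integral => w _ do rewrite card_sum.
  rewrite (_ : (fun w => (\sum_(k in L) ((k \in Half w) : nat)%:R)%:E) =
      (fun w => (\sum_(k in L) 1 * \1_(E k) w)%:E)); last first.
    apply/funext => w; congr (_%:E); apply: eq_bigr => k _; rewrite mul1r indicE.
    suff -> : (w \in E k) = (k \in Half w) by [].
    by apply/idP/idP => [/set_mem/EH|/EH h]; [|apply: mem_set].
  rewrite int_sum //; apply: eq_bigr => k _; by rewrite PE.
apply: (le_trans step1).
rewrite int_sum //; last 2 first.
  - by move=> kj; exact: ltW.
  - by move=> kj; exact: (mD kj.2 kj.1).
rewrite step3.
under eq_bigr => kj _ do rewrite PD -EFinM.
under [X in (_ * X)%E]eq_bigr => k _ do rewrite -EFinM.
rewrite !sumEFin -EFinM lee_fin.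
rewrite -(pair_big (fun k => k \in L) xpredT (fun k j => c * r k ^+ 2)) /=.
rewrite mulr_sumr; apply: ler_sum => k kL.
have /andP[r0 rth] := hr k kL.
have -> : \sum_(j < B | true) c * r k ^+ 2 = (2 * t - 1)^-1 * (r k * r k).
  rewrite sumr_const card_ord -mulr_natr /c expr2.
  by field; apply/andP; split; apply: lt0r_neq0.
rewrite mul1r [th / _]mulrC -mulrA; apply: ler_wpM2l; first by rewrite invr_ge0 ltW.
exact: ler_wpM2r.
Qed.

Section uniq.
Context d (T : measurableType d) (R : realType) (P : probability T R).
Context (U : pointedType) (G : set (set U)).
Local Notation UG := (g_sigma_algebraType G).
Variables (f f0 : T -> UG) (mf : measurable_fun setT f) (mf0 : measurable_fun setT f0).
Variables (E : set T) (mE : measurable E) (c : {nonneg R}).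
Hypothesis setIG : setI_closed G.
Hypothesis GT : G setT.
Hypothesis agree : forall C, G C -> P (f @^-1` C `&` E) = ((c%:num)%:E * P (f0 @^-1` C))%E.
Lemma uniq_ext C : <<s G>> C -> P (f @^-1` C `&` E) = ((c%:num)%:E * P (f0 @^-1` C))%E.
Proof.
move=> sC.
have [m1 Hm1] : {m1 : {measure set UG -> \bar R} | forall A, m1 A = P (f @^-1` A `&` E)}.
  by unshelve eexists (pushforward (mrestr P mE) f) => //.
have [m2 Hm2] : {m2 : {measure set UG -> \bar R} | forall A, m2 A = ((c%:num)%:E * P (f0 @^-1` A))%E}.
  by unshelve eexists (mscale c (pushforward P f0)) => //.
rewrite -Hm1 -Hm2.
apply: (@measure_unique _ R UG G (fun=> setT) erefl setIG (fun=> GT) _ m1 m2) => //.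
- by rewrite bigcup_const.
- by move=> A GA; rewrite Hm1 Hm2 agree.
- move=> n; rewrite Hm1 preimage_setT setTI.
  by rewrite (le_lt_trans (probability_le1 _ mE)) // ltry.
Qed.
End uniq.

Section main.
Context (R : realType) (d d' : measure_display) (T : measurableType d') (X : measurableType d)
  (P : probability T R) (n B : nat) (Z : 'I_n -> T -> X)
  (A : 'I_B -> T -> {set 'I_n} * {set 'I_n}).
Hypothesis mZ : forall i, measurable_fun setT (Z i).
Hypothesis mA : forall j a, measurable (A j @^-1` [set a]).
Hypothesis idZ : forall i i' (E : set X), measurable E -> P (Z i @^-1` E) = P (Z i' @^-1` E).
Hypothesis indep : forall (E : 'I_n -> set X) (F : 'I_B -> set ({set 'I_n} * {set 'I_n})),
      (forall i, measurable (E i)) ->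
      P ((\bigcap_i (Z i @^-1` E i)) `&` (\bigcap_j (A j @^-1` F j)))
      = ((\prod_(i < n) P (Z i @^-1` E i)) * (\prod_(j < B) P (A j @^-1` F j)))%E.

Local Notation m := n./2.

Definition rect : set (set ('I_m -> X)) :=
  [set C | exists E : 'I_m -> set X, (forall i, measurable (E i)) /\
     C = [set x | forall i, E i (x i)]].

Definition rs (E : 'I_m -> set X) : set ('I_m -> X) := [set x | forall i, E i (x i)].

Lemma rect_setI : setI_closed rect.
Proof.
move=> C1 C2 [E1 [mE1 ->]] [E2 [mE2 ->]]; exists (fun i => E1 i `&` E2 i); split.
  by move=> i; exact: measurableI.
by apply/seteqP; split => x /=; [move=> [h1 h2] i; split|move=> h; split => i; case: (h i)].
Qed.

Lemma rect_setT : rect setT.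
Proof. by exists (fun=> setT); split => //; apply/seteqP; split => x. Qed.

Lemma cyl_rect : <<s @cylinders _ X m>> `<=` <<s rect>>.
Proof.
apply: smallest_sub; first exact: smallest_sigma_algebra.
move=> C [i [E [mE ->]]]; apply: sub_sigma_algebra.
exists (fun k => if k == i then E else setT); split.
  by move=> k; case: ifP.
apply/seteqP; split => x /=.
  by move=> Ex k; case: ifP => [/eqP->|].
by move=> /(_ i); rewrite eqxx.
Qed.

Definition Y (g : 'I_m -> 'I_n) (w : T) : g_sigma_algebraType rect := fun i => Z (g i) w.

Lemma Y_meas g : measurable_fun setT (Y g).
Proof.
apply: (@measurability _ _ T (g_sigma_algebraType rect) setT (Y g) rect erefl).
move=> _ [C [E [mE ->]] <-].
rewrite setTI (_ : _ @^-1` _ = \bigcap_(k in [set: 'I_m]) (Z (g k) @^-1` E k)).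
  apply: fin_bigcap_measurable; first exact: finite_finset.
  move=> k _; rewrite -[X in measurable X]setTI; exact: mZ.
by apply/seteqP; split => w /=; [move=> h k _; exact: h | move=> h k; exact: h k I].
Qed.

Lemma Y_pre g C : <<s rect>> C -> measurable (Y g @^-1` C).
Proof. by move=> sC; rewrite -[X in measurable X]setTI; exact: Y_meas. Qed.

Definition ext (g : 'I_m -> 'I_n) (E : 'I_m -> set X) (i : 'I_n) : set X :=
  if [pick k | g k == i] is Some k then E k else setT.

Lemma ext_g g E k : injective g -> ext g E (g k) = E k.
Proof.
move=> ig; rewrite /ext; case: pickP => [k' /eqP /ig -> //| /(_ k)].
by rewrite eqxx.
Qed.

Lemma ext_out g E i : (forall k, g k != i) -> ext g E i = setT.
Proof. by move=> h; rewrite /ext; case: pickP => // k /eqP e; move: (h k); rewrite e eqxx. Qed.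

Lemma ext_meas g E i : (forall k, measurable (E k)) -> measurable (ext g E i).
Proof. by move=> mE; rewrite /ext; case: pickP. Qed.

Lemma rect_pre g E : injective g ->
  Y g @^-1` rs E = \bigcap_i (Z i @^-1` ext g E i).
Proof.
move=> ig; apply/seteqP; split => w /=.
- move=> h i _; rewrite /ext; case: pickP => // k /eqP <-; exact: h.
- by move=> h k; move: (h (g k) I); rewrite /= ext_g.
Qed.

Lemma prod_rule E F j : (forall i, measurable (E i)) ->
  P (\bigcap_i (Z i @^-1` E i) `&` A j @^-1` F) =
  ((\prod_(i < n) P (Z i @^-1` E i)) * P (A j @^-1` F))%E.
Proof.
move=> mE; have := indep E (fun j' => if j' == j then F else setT) mE.
rewrite (_ : (\bigcap_(j' : 'I_B) (A j' @^-1` (if j' == j then F else setT))) = A j @^-1` F).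
  move=> ->; congr (_ * _)%E.
  rewrite (bigD1 j) //= eqxx big1 ?mule1 // => j' /negbTE ->.
  by rewrite preimage_setT probability_setT.
apply/seteqP; split => w /=.
  by move/(_ j I); rewrite eqxx.
by move=> h j' _; case: ifP => // /eqP ->.
Qed.

Lemma big_ext g (E : 'I_m -> set X) : injective g ->
  (\prod_(i < n) P (Z i @^-1` ext g E i) = \prod_(k < m) P (Z (g k) @^-1` E k))%E.
Proof.
move=> ig.
rewrite (bigID (mem (g @: [set: _ ])%SET)) /= [X in (_ * X)%E]big1 ?mule1.
  transitivity (\prod_(i in (g @: [set: _ ])%SET) P (Z i @^-1` ext g E i))%E.
    by apply: eq_bigl.
  rewrite big_imset /=; last by move=> x y _ _; exact: ig.
  by apply: eq_big => // k; rewrite ?inE //= ext_g.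
move=> i hi; rewrite ext_out ?preimage_setT ?probability_setT //.
move=> k; apply: contra hi => /eqP <-; by rewrite imset_f.
Qed.

Lemma rect2 g1 g2 E1 E2 F j : injective g1 -> injective g2 -> (forall k k', g1 k != g2 k') ->
  (forall k, measurable (E1 k)) -> (forall k, measurable (E2 k)) ->
  P (A j @^-1` F `&` Y g1 @^-1` rs E1 `&` Y g2 @^-1` rs E2) =
  (P (A j @^-1` F) * \prod_(k < m) P (Z (g1 k) @^-1` E1 k) * \prod_(k < m) P (Z (g2 k) @^-1` E2 k))%E.
Proof.
move=> i1 i2 dg mE1 mE2.
rewrite !rect_pre // (_ : _ `&` _ = \bigcap_i (Z i @^-1` (ext g1 E1 i `&` ext g2 E2 i)) `&` A j @^-1` F).
  rewrite prod_rule; last by move=> i; apply: measurableI; exact: ext_meas.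
  rewrite (eq_bigr (fun i => P (Z i @^-1` ext g1 E1 i) * P (Z i @^-1` ext g2 E2 i))%E).
    by rewrite big_split /= !big_ext // muleC muleA.
  move=> i _.
  have [[k hk]|h1] := pselect (exists k, g1 k = i).
    rewrite (@ext_out g2 E2 i); last by move=> k'; rewrite -hk eq_sym.
    by rewrite setIT preimage_setT probability_setT mule1.
  rewrite (@ext_out g1 E1 i); last by move=> k; apply/eqP => e; apply: h1; exists k.
  by rewrite setTI preimage_setT probability_setT mul1e.
apply/seteqP; split => w /=.
  by move=> [[hF h1] h2]; split => // i _; split; [exact: h1|exact: h2].
by move=> [h hF]; split; [split => // i _|move=> i _]; case: (h i I).
Qed.

Lemma rect1 g E (j : 'I_B) : injective g -> (forall k, measurable (E k)) ->
  P (Y g @^-1` rs E) = (\prod_(k < m) P (Z (g k) @^-1` E k))%E.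
Proof.
move=> ig mE; have := prod_rule (ext g E) setT j (fun i => ext_meas g E i mE).
by rewrite preimage_setT setIT probability_setT mule1 big_ext // -rect_pre.
Qed.

Lemma prod_id g g' E : (forall k, measurable (E k)) ->
  (\prod_(k < m) P (Z (g k) @^-1` E k) = \prod_(k < m) P (Z (g' k) @^-1` E k))%E.
Proof. by move=> mE; apply: eq_bigr => k _; exact: idZ. Qed.

Lemma mAF j F : measurable (A j @^-1` F).
Proof.
rewrite (_ : _ @^-1` _ = \bigcup_(a in F) A j @^-1` [set a]).
  apply: fin_bigcup_measurable; first exact: finite_finset.
  by move=> a _; exact: mA.
by apply/seteqP; split => w /=; [move=> h; exists (A j w) | move=> [a Fa /= ->]].
Qed.

Lemma rs_meas g E : (forall k, measurable (E k)) -> measurable (Y g @^-1` rs E).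
Proof. by move=> mE; apply: Y_pre; apply: sub_sigma_algebra; exists E. Qed.

Lemma stage1 g0 g1 g2 E2 F j : injective g0 -> injective g1 -> injective g2 ->
  (forall k k', g1 k != g2 k') ->
  (forall k, measurable (E2 k)) -> forall C, <<s rect>> C ->
  P (Y g1 @^-1` C `&` (A j @^-1` F `&` Y g2 @^-1` rs E2)) =
  (P (A j @^-1` F) * P (Y g0 @^-1` rs E2) * P (Y g0 @^-1` C))%E.
Proof.
move=> i0 i1 i2 dg mE2.
have mS : measurable (A j @^-1` F `&` Y g2 @^-1` rs E2).
  by apply: measurableI; [exact: mAF|exact: rs_meas].
have c0 : (0 <= fine (P (A j @^-1` F) * P (Y g0 @^-1` rs E2))%E)%R.
  by apply: fine_ge0; apply: mule_ge0; exact: measure_ge0.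
have ceq : ((NngNum c0)%:num%:E = P (A j @^-1` F) * P (Y g0 @^-1` rs E2))%E.
  rewrite /= fineK // fin_numM // fin_num_measure //; [exact: mAF|exact: rs_meas].
move=> C sC; rewrite -ceq.
apply: (@uniq_ext _ T R P _ rect (Y g1) (Y g0) (Y_meas g1) (Y_meas g0) _ mS (NngNum c0) rect_setI rect_setT) => // C' [E1 [mE1 ->]].
rewrite ceq (_ : _ `&` _ = A j @^-1` F `&` Y g1 @^-1` rs E1 `&` Y g2 @^-1` rs E2); last first.
  by apply/seteqP; split => w /=; tauto.
rewrite rect2 // -/(rs E1) !(rect1 _ _ j) // (prod_id g1 g0) // (prod_id g2 g0) //.
by rewrite -!muleA [X in (_ * X)%E]muleC.
Qed.

Lemma indep2 g0 g1 g2 F j C1 C2 : injective g0 -> injective g1 -> injective g2 ->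
  (forall k k', g1 k != g2 k') -> <<s rect>> C1 -> <<s rect>> C2 ->
  P (A j @^-1` F `&` Y g1 @^-1` C1 `&` Y g2 @^-1` C2) =
  (P (A j @^-1` F) * P (Y g0 @^-1` C1) * P (Y g0 @^-1` C2))%E.
Proof.
move=> i0 i1 i2 dg s1 s2.
have mS : measurable (A j @^-1` F `&` Y g1 @^-1` C1).
  by apply: measurableI; [exact: mAF|exact: Y_pre].
have c0 : (0 <= fine (P (A j @^-1` F) * P (Y g0 @^-1` C1))%E)%R.
  by apply: fine_ge0; apply: mule_ge0; exact: measure_ge0.
have ceq : ((NngNum c0)%:num%:E = P (A j @^-1` F) * P (Y g0 @^-1` C1))%E.
  rewrite /= fineK // fin_numM // fin_num_measure //; [exact: mAF|exact: Y_pre].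
rewrite (_ : _ `&` _ = Y g2 @^-1` C2 `&` (A j @^-1` F `&` Y g1 @^-1` C1)); last by rewrite setIC.
rewrite -ceq.
apply: (@uniq_ext _ T R P _ rect (Y g2) (Y g0) (Y_meas g2) (Y_meas g0) _ mS (NngNum c0) rect_setI rect_setT) => // C' [E2 [mE2 ->]].
rewrite ceq (_ : _ `&` _ = Y g1 @^-1` C1 `&` (A j @^-1` F `&` Y g2 @^-1` rs E2)); last first.
  by apply/seteqP; split => w /=; tauto.
rewrite (stage1 g0) // -/(rs E2).
by rewrite -!muleA [X in (_ * X)%E]muleC.
Qed.

Hypothesis n0 : (0 < n)%N.
Hypothesis hv : valid_pairs A.

Definition x0 : 'I_n := Ordinal n0.
Definition ga (a : {set 'I_n}) (k : 'I_m) : 'I_n := nth x0 (enum a) k.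
Definition g0 : 'I_m -> 'I_n := widen_ord (half_leq_self n).

Lemma g0_inj : injective g0.
Proof. by move=> i j h; apply/val_inj; exact: (congr1 val h). Qed.

Lemma ga_inj (a : {set 'I_n}) : #|a| = m -> injective (ga a).
Proof.
move=> e i j; rewrite /ga => /eqP; rewrite nth_uniq ?enum_uniq -?cardE ?e //.
by move/eqP/val_inj.
Qed.

Lemma ga_mem (a : {set 'I_n}) k : #|a| = m -> ga a k \in a.
Proof. by move=> e; rewrite -mem_enum /ga mem_nth // -cardE e. Qed.

Lemma ga_disj (a1 a2 : {set 'I_n}) : #|a1| = m -> #|a2| = m -> [disjoint a1 & a2]%B ->
  forall k k', ga a1 k != ga a2 k'.
Proof.
move=> e1 e2 dis k k'; apply/eqP => h.
by move: (disjointFr dis (ga_mem a1 k e1)); rewrite h (ga_mem a2 k' e2).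
Qed.

Lemma sel_sub_Y p (S : forall m : nat, ('I_m -> X) -> {set 'I_p}) (a : {set 'I_n}) w :
  #|a| = m -> sel_sub S Z a w = S m (Y (ga a) w).
Proof.
move=> e; rewrite /sel_sub /Y /ga.
have -> : (fun i => Z (enum_val i) w) =
   (fun i : 'I_#|a| => (fun j : nat => Z (nth x0 (enum a) j) w) i).
  by apply/funext => i; rewrite (enum_val_nth x0).
by rewrite e.
Qed.

Lemma joint_eq j (b : ('I_m -> X) -> bool) :
  [set w | b (Y (ga (A j w).1) w) && b (Y (ga (A j w).2) w)] =
  \bigcup_(a in [set: {set 'I_n} * {set 'I_n}])
     (A j @^-1` [set a] `&` Y (ga a.1) @^-1` [set x | b x] `&` Y (ga a.2) @^-1` [set x | b x]).
Proof.
apply/seteqP; split => w /=.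
  by move=> /andP[h1 h2]; exists (A j w) => //.
by move=> [a _ [[/= -> h1] h2]]; apply/andP.
Qed.

Lemma joint_meas j (b : ('I_m -> X) -> bool) : <<s rect>> [set x | b x] ->
  measurable [set w | b (Y (ga (A j w).1) w) && b (Y (ga (A j w).2) w)].
Proof.
move=> sC; rewrite joint_eq; apply: fin_bigcup_measurable; first exact: finite_finset.
move=> a _; apply: measurableI; [apply: measurableI|]; [exact: mA|exact: Y_pre|exact: Y_pre].
Qed.

Lemma joint j (b : ('I_m -> X) -> bool) : <<s rect>> [set x | b x] ->
  P [set w | b (Y (ga (A j w).1) w) && b (Y (ga (A j w).2) w)] =
  (P (Y g0 @^-1` [set x | b x]) * P (Y g0 @^-1` [set x | b x]))%E.
Proof.
move=> sC; set q := P (Y g0 @^-1` _).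
rewrite joint_eq measure_fin_bigcup //; last 3 first.
- exact: finite_finset.
- move=> a a' _ _ [w [[[/= e _] _] [[/= e' _] _]]]; by rewrite -e -e'.
- move=> a _; apply: measurableI; [apply: measurableI|]; [exact: mA|exact: Y_pre|exact: Y_pre].
rewrite (eq_fsbigr (fun a => P (A j @^-1` [set a]) * (q * q)))%E; last first.
  move=> a _.
  have [[w0 e]|ne] := pselect (exists w, A j w = a).
    have [e1 [e2 dis]] := hv j w0; rewrite e in e1 e2 dis.
    rewrite muleA; apply: (@indep2 g0 (ga a.1) (ga a.2) [set a] j [set x | b x] [set x | b x]) => //.
    - exact: g0_inj.
    - exact: ga_inj.
    - exact: ga_inj.
    - exact: ga_disj.
  have -> : A j @^-1` [set a] = set0.
    by apply/seteqP; split => w //= h; apply: ne; exists w.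
  by rewrite !set0I !measure0 mul0e.
rewrite fsbig_finite /=; last exact: finite_finset.
rewrite -ge0_sume_distrl; last by move=> a _; exact: measure_ge0.
rewrite -fsbig_finite; last exact: finite_finset.
rewrite -measure_fin_bigcup //.
- rewrite (_ : \bigcup_(a in _) _ = setT).
    by transitivity (1 * (q * q))%E; [congr (_ * _)%E; exact: probability_setT | exact: mul1e].
  by apply/seteqP; split => w // _; exists (A j w).
- exact: finite_finset.
- move=> a a' _ _ [w [/= e e']]; by rewrite -e -e'.
Qed.


Variables (p : nat) (S : forall m : nat, ('I_m -> X) -> {set 'I_p}).
Hypothesis hS : measurable_selection S.
Hypothesis B0 : (0 < B)%N.

Lemma Ck_rect k : <<s rect>> [set x : 'I_m -> X | k \in S m x].
Proof. by apply: cyl_rect; exact: hS. Qed.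

Lemma Ck_rectN k : <<s rect>> [set x : 'I_m -> X | k \notin S m x].
Proof.
rewrite (_ : [set x | _] = ~` [set x : 'I_m -> X | k \in S m x]).
  exact: sigma_algebraC (Ck_rect k).
by apply/seteqP; split => x /=; [move/negP|move/negP].
Qed.

Lemma Ek_meas k : measurable [set w | k \in sel_half S Z w].
Proof.
rewrite (_ : [set w | _] = Y g0 @^-1` [set x | k \in S m x]); last by [].
exact: Y_pre (Ck_rect k).
Qed.

Lemma Ek_measN k : measurable [set w | k \notin sel_half S Z w].
Proof.
rewrite (_ : [set w | _] = Y g0 @^-1` [set x | k \notin S m x]); last by [].
exact: Y_pre (Ck_rectN k).
Qed.

Lemma xy_eq j k (f : bool -> bool) :
  [set w | f (k \in sel_sub S Z (A j w).1 w) && f (k \in sel_sub S Z (A j w).2 w)] =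
  [set w | f (k \in S m (Y (ga (A j w).1) w)) && f (k \in S m (Y (ga (A j w).2) w))].
Proof.
by apply/seteqP; split=> w /=; have [e1 [e2 _]] := hv j w; rewrite !sel_sub_Y.
Qed.

Lemma part1 (theta tau : R) : 1/2 < tau ->
  (\int[P]_w (#|S_CPSS S Z A tau w :&: L_set P S Z theta|%:R)%:E
      <= (theta / (2 * tau - 1))%:E *
         \int[P]_w (#|sel_half S Z w :&: L_set P S Z theta|%:R)%:E)%E.
Proof.
move=> t1.
apply: (@final R d' T P p B (L_set P S Z theta) (S_CPSS S Z A tau) (sel_half S Z)
  (fun j k w => k \in sel_sub S Z (A j w).1 w)
  (fun j k w => k \in sel_sub S Z (A j w).2 w)
  (fun k => [set w | k \in sel_half S Z w])
  (fun k => fine (sel_prob P S Z k)) tau theta) => //.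
- by move=> k w; rewrite inE.
- move=> j k; rewrite (xy_eq j k id).
  exact: (joint_meas j (fun x => k \in S m x) (Ck_rect k)).
- move=> j k; rewrite (xy_eq j k id).
  transitivity (P (Y g0 @^-1` [set x | k \in S m x]) * P (Y g0 @^-1` [set x | k \in S m x]))%E.
    exact: (joint j (fun x => k \in S m x) (Ck_rect k)).
  have qE : P (Y g0 @^-1` [set x | k \in S m x]) = (fine (sel_prob P S Z k))%:E.
    rewrite /sel_prob fineK //; apply: fin_num_measure; exact: Ek_meas.
  by rewrite qE -EFinM expr2.
- by move=> k; exact: Ek_meas.
- move=> k; rewrite /sel_prob fineK //; apply: fin_num_measure; exact: Ek_meas.
- move=> k; rewrite inE => hk; apply/andP; split.
    by apply: fine_ge0; exact: measure_ge0.
  rewrite -[theta]/(fine theta%:E); apply: fine_le => //.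
  apply: fin_num_measure; exact: Ek_meas.
Qed.

Lemma probN k : P [set w | k \notin sel_half S Z w] = (1 - fine (sel_prob P S Z k))%:E.
Proof.
rewrite (_ : [set w | _] = ~` [set w | k \in sel_half S Z w]); last first.
  by apply/seteqP; split => w /=; [move/negP|move/negP].
transitivity (1 - P [set w | k \in sel_half S Z w])%E.
  exact: (probability_setC P (Ek_meas k)).
rewrite EFinB /sel_prob fineK //; apply: fin_num_measure; exact: Ek_meas.
Qed.

Lemma part2 (theta tau : R) : 0 <= tau < 1/2 ->
  (\int[P]_w (#|~: S_CPSS S Z A tau w :&: H_set P S Z theta|%:R)%:E
      <= ((1 - theta) / (1 - 2 * tau))%:E *
         \int[P]_w (#|~: sel_half S Z w :&: H_set P S Z theta|%:R)%:E)%E.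
Proof.
move=> /andP[t0 t1].
rewrite (_ : 1 - 2 * tau = 2 * (1 - tau) - 1); last by ring.
apply: (@final R d' T P p B (H_set P S Z theta) (fun w => ~: S_CPSS S Z A tau w)
  (fun w => ~: sel_half S Z w)
  (fun j k w => k \notin sel_sub S Z (A j w).1 w)
  (fun j k w => k \notin sel_sub S Z (A j w).2 w)
  (fun k => [set w | k \notin sel_half S Z w])
  (fun k => fine (P [set w | k \notin sel_half S Z w])) (1 - tau) (1 - theta)) => //.
- by lra.
- move=> k w; rewrite !inE -ltNge /Pi_hat => h.
  have -> : \sum_(j < B) (((k \notin sel_sub S Z (A j w).1 w) : nat)%:R
                        + ((k \notin sel_sub S Z (A j w).2 w) : nat)%:R) =
     (2 * B)%:R - \sum_(j < B) (((k \in sel_sub S Z (A j w).1 w) : nat)%:R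
                        + ((k \in sel_sub S Z (A j w).2 w) : nat)%:R) :> R.
    have -> : ((2 * B)%:R : R) = \sum_(j < B) 2 by rewrite sumr_const card_ord natrM mulr_natr.
    rewrite -sumrB.
    apply: eq_bigr => j _.
    by case: (_ \in _); case: (_ \in _) => /=; rewrite ?(mulr1n, mulr0n); lra.
  rewrite mulrBr mulVf ?gt_eqF ?ltr0n ?muln_gt0 //.
  by lra.
- move=> j k; rewrite (xy_eq j k negb).
  exact: (joint_meas j (fun x => k \notin S m x) (Ck_rectN k)).
- move=> j k; rewrite (xy_eq j k negb).
  transitivity (P (Y g0 @^-1` [set x | k \notin S m x]) * P (Y g0 @^-1` [set x | k \notin S m x]))%E.
    exact: (joint j (fun x => k \notin S m x) (Ck_rectN k)).
  have qE : P (Y g0 @^-1` [set x | k \notin S m x]) = (fine (P [set w | k \notin sel_half S Z w]))%:E.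
    rewrite fineK //; apply: fin_num_measure; exact: Ek_measN.
  by rewrite qE -EFinM expr2.
- by move=> k; exact: Ek_measN.
- move=> k; rewrite fineK //; apply: fin_num_measure; exact: Ek_measN.
- by move=> k w; rewrite inE.
- move=> k; rewrite inE => hk; apply/andP; split.
    by apply: fine_ge0; exact: measure_ge0.
  rewrite probN /=.
  have : theta < fine (sel_prob P S Z k).
    rewrite -lte_fin fineK //; apply: fin_num_measure; exact: Ek_meas.
  by lra.
Qed.

End main.

Theorem theorem1 (R : realType) (d d' : measure_display)
    (T : measurableType d') (X : measurableType d) (P : probability T R)
    (n p B : nat) (Z : 'I_n -> T -> X)
    (S : forall m : nat, ('I_m -> X) -> {set 'I_p})
    (A : 'I_B -> T -> {set 'I_n} * {set 'I_n}) (theta : R) :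
  (2 <= n)%N -> (1 <= p)%N -> (1 <= B)%N -> 0 <= theta <= 1 ->
  measurable_selection S -> iid_and_indep P Z A -> valid_pairs A ->
  (forall tau : R, 1/2 < tau <= 1 ->
     (\int[P]_w (#|S_CPSS S Z A tau w :&: L_set P S Z theta|%:R)%:E
      <= (theta / (2 * tau - 1))%:E *
         \int[P]_w (#|sel_half S Z w :&: L_set P S Z theta|%:R)%:E)%E) /\
  (forall tau : R, 0 <= tau < 1/2 ->
     (\int[P]_w (#|~: S_CPSS S Z A tau w :&: H_set P S Z theta|%:R)%:E
      <= ((1 - theta) / (1 - 2 * tau))%:E *
         \int[P]_w (#|~: sel_half S Z w :&: H_set P S Z theta|%:R)%:E)%E).
Proof.
move=> n2 _ B1 _ hS [mZ [mA [idZ indep]]] hv.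
have n0 : (0 < n)%N by apply: leq_trans n2.
split.
- move=> tau /andP[t1 _].
  exact: (@part1 _ _ _ _ _ P _ _ Z A mZ mA idZ indep n0 hv _ S hS B1 theta tau t1).
- move=> tau ht.
  exact: (@part2 _ _ _ _ _ P _ _ Z A mZ mA idZ indep n0 hv _ S hS B1 theta tau ht).
Qed.
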